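(* Let $N\ge 1$ be an integer and let $P_N$ be the polynomial defined in the context. Then for every $t\in(0,\pi)$ with $t\neq \frac{2\pi}{N+2}$, $$ P_N(e^{it})=\frac{1}{2\bigl(\cos t-\cos\frac{2\pi}{N+2}\bigr)}+\frac{1-\cos\frac{2\pi}{N+2}}{(N+2)(1-\cos t)}\cdot\frac{\sin t\,\sin\frac{(N+2)t}{2}}{\bigl(\cos t-\cos\frac{2\pi}{N+2}\bigr)^2}\,e^{\frac{(N+2)}{2}it}. $$
   Context: For an integer $N\ge1$ put $b_0=1$ and, for $k=1,\dots,N$, $$b_k=\frac{(N-k+3)\sin\frac{(k+1)\pi}{N+2}-(N-k+1)\sin\frac{(k-1)\pi}{N+2}}{(N+2)\sin\frac{\pi}{N+2}}$$ (these are the cosine coefficients of the Egerváry–Szász polynomial $\frac{2}{N+2}\bigl|\sum_{k=0}^N\sin\frac{\pi(k+1)}{N+2}e^{ikt}\bigr|^2=\sum_{k=0}^N b_k\cos kt$). Define the polynomial $$P_N(z)=\frac{1}{\sin\frac{2\pi}{N+2}}\sum_{k=1}^N b_k\sin\frac{k\pi}{N+2}\,z^k,$$ which satisfies $P_N(0)=0$, $P_N'(0)=1$ (e.g. $P_1(z)=z$, $P_2(z)=z+\tfrac12z^2$, $P_3(z)=z+\tfrac{2}{\sqrt5}z^2+\tfrac12(1-\tfrac1{\sqrt5})z^3$, $P_4(z)=z+\tfrac76z^2+\tfrac23z^3+\tfrac16z^4$). *)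

(* Defs.v *)
From Stdlib Require Import Reals Lra Lia.
Open Scope R_scope.

Definition C : Type := (R * R)%type.
Definition Cadd (z w : C) : C := (fst z + fst w, snd z + snd w).
Definition Cmul (z w : C) : C :=
  (fst z * fst w - snd z * snd w, fst z * snd w + snd z * fst w).
Definition Cscale (r : R) (z : C) : C := (r * fst z, r * snd z).
Definition Cof (r : R) : C := (r, 0).
Fixpoint Cpow (z : C) (n : nat) : C :=
  match n with O => (1, 0) | S m => Cmul z (Cpow z m) end.
Definition Cexpi (t : R) : C := (cos t, sin t).

(* Csum f m n = f m + f (m+1) + ... + f (m+n-1)  (n terms) *)
Fixpoint Csum (f : nat -> C) (m n : nat) : C :=
  match n with O => (0, 0) | S n' => Cadd (f m) (Csum f (S m) n') end.

(* Cosine coefficients b_k of the Egervary--Szasz polynomial *)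
Definition b (N k : nat) : R :=
  match k with
  | O => 1
  | _ =>
    let M := INR N + 2 in
    ((INR N - INR k + 3) * sin ((INR k + 1) * PI / M)
     - (INR N - INR k + 1) * sin ((INR k - 1) * PI / M))
    / (M * sin (PI / M))
  end.

Definition P (N : nat) (z : C) : C :=
  Cscale (/ sin (2 * PI / (INR N + 2)))
    (Csum (fun k => Cscale (b N k * sin (INR k * PI / (INR N + 2))) (Cpow z k)) 1 N).

(* Main.v *)
From Stdlib Require Import Reals Lra Lia.
From Coquelicot Require Import Coquelicot.
Require Import Defs.
Open Scope R_scope.

Ltac toC := match goal with |- ?a = ?b => change (@eq Coquelicot.Complex.C a b) end.

Lemma Cmul_eq z w : Cmul z w = Cmult z w. Proof. reflexivity. Qed.
Lemma Cadd_eq z w : Cadd z w = Cplus z w. Proof. reflexivity. Qed.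
Lemma Cscale_eq r z : Cscale r z = Cmult (RtoC r) z.
Proof. destruct z as [a b0]; unfold Cscale, Cmult, RtoC; simpl; f_equal; ring. Qed.
Lemma Cof_eq r : Cof r = RtoC r. Proof. reflexivity. Qed.
Lemma Cpow_eq z n : Defs.Cpow z n = Coquelicot.Complex.Cpow z n.
Proof. induction n; simpl; [reflexivity| rewrite Cmul_eq, IHn; reflexivity]. Qed.

Lemma E_add a c : Cexpi (a + c) = Cmult (Cexpi a) (Cexpi c).
Proof. unfold Cexpi, Cmult; simpl; rewrite cos_plus, sin_plus; f_equal; ring. Qed.
Lemma E_nz a : Cexpi a <> RtoC 0.
Proof. unfold Cexpi, RtoC; intro H; injection H; intros H1 H2.
 pose proof (sin2_cos2 a). unfold Rsqr in *. rewrite H1, H2 in *. lra. Qed.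
Lemma E_neg a : Cexpi (- a) = Cinv (Cexpi a).
Proof. rewrite <- (Cmult_1_l (Cexpi (-a))), <- (Cinv_l (Cexpi a)) by apply E_nz.
 rewrite <- Cmult_assoc, <- E_add, Rplus_opp_r.
 unfold Cexpi at 2; rewrite cos_0, sin_0. apply Cmult_1_r. Qed.
Lemma Rcos_E x : RtoC (cos x) = ((Cexpi x + / Cexpi x) / 2)%C.
Proof. rewrite <- E_neg. unfold Cexpi. rewrite cos_neg, sin_neg.
 unfold Cdiv, Cplus, Cmult, Cinv, RtoC; simpl. f_equal; field. Qed.
Lemma Rsin_E x : RtoC (sin x) = ((Cexpi x - / Cexpi x) / (2 * Ci))%C.
Proof. rewrite <- E_neg. unfold Cexpi. rewrite cos_neg, sin_neg.
 unfold Cdiv, Cminus, Cplus, Copp, Cmult, Cinv, RtoC, Ci; simpl. f_equal; field. Qed.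
Lemma E_pow k x : Cexpi (INR k * x) = Coquelicot.Complex.Cpow (Cexpi x) k.
Proof. induction k. simpl. rewrite Rmult_0_l. unfold Cexpi; rewrite cos_0, sin_0; reflexivity.
 rewrite S_INR, Rmult_plus_distr_r, Rmult_1_l, E_add, IHk. simpl. apply Cmult_comm. Qed.
Lemma RtoC_div x y : y <> 0 -> RtoC (x / y) = (RtoC x / RtoC y)%C.
Proof. intro H. unfold Cdiv, Cmult, Cinv, RtoC; simpl. f_equal; field; auto. Qed.
Lemma RtoC_inv' y : y <> 0 -> RtoC (/ y) = (/ RtoC y)%C.
Proof. intro H. unfold Cinv, RtoC; simpl. f_equal; field; auto. Qed.
Lemma Cpow_mul z w n : Coquelicot.Complex.Cpow (z * w) n = (Coquelicot.Complex.Cpow z n * Coquelicot.Complex.Cpow w n)%C.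
Proof. induction n; simpl. symmetry; apply Cmult_1_l. rewrite IHn. ring. Qed.

Lemma Csum_last f m n : Csum f m (S n) = Cadd (Csum f m n) (f (m + n)%nat).
Proof. revert m; induction n; intro m.
 - simpl. rewrite Nat.add_0_r. unfold Cadd; simpl; f_equal; ring.
 - change (Csum f m (S (S n))) with (Cadd (f m) (Csum f (S m) (S n))).
   change (Csum f m (S n)) with (Cadd (f m) (Csum f (S m) n)).
   rewrite IHn. replace (S m + n)%nat with (m + S n)%nat by lia. unfold Cadd; simpl; f_equal; ring. Qed.
Lemma Csum_ext f g m n : (forall k, (m <= k < m + n)%nat -> f k = g k) -> Csum f m n = Csum g m n.
Proof. revert m; induction n; intros m H; simpl; auto. rewrite (H m) by lia. rewrite IHn; auto. intros; apply H; lia. Qed.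
Lemma Csum_plus f g m n : Csum (fun k => (f k + g k)%C) m n = (Csum f m n + Csum g m n)%C.
Proof. revert m; induction n; intro m; cbn [Csum]. unfold Cplus; simpl; f_equal; ring.
 rewrite IHn. change Cadd with Cplus. toC. ring. Qed.
Lemma Csum_scal c f m n : Csum (fun k => (c * f k)%C) m n = (c * Csum f m n)%C.
Proof. revert m; induction n; intro m; cbn [Csum]. unfold Cmult; apply injective_projections; simpl; ring.
 rewrite IHn. change Cadd with Cplus. toC. ring. Qed.

Lemma Csum_geo (a bb q : Coquelicot.Complex.C) n : q <> RtoC 1 ->
  Csum (fun k => ((a + bb * RtoC (INR k)) * Coquelicot.Complex.Cpow q k)%C) 1 n =
  (a * (q * (Coquelicot.Complex.Cpow q n - 1) / (q - 1)) +
   bb * (q * (1 - (RtoC (INR n) + 1) * Coquelicot.Complex.Cpow q n + RtoC (INR n) * Coquelicot.Complex.Cpow q n * q) / ((1 - q) * (1 - q))))%C.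
Proof. intro Hq. assert (H1 : (q - 1)%C <> RtoC 0). { intro H; apply Hq. rewrite <- (Cplus_0_l 1). rewrite <- H. ring. }
 assert (H2 : (1 - q)%C <> RtoC 0). { intro H; apply Hq. rewrite <- (Cplus_0_r q) at 1. rewrite <- H. ring. }
 induction n.
 - cbn [Csum Coquelicot.Complex.Cpow INR]. change (0,0) with (RtoC 0). toC. field. auto.
 - rewrite Csum_last, IHn, Cadd_eq. replace (1 + n)%nat with (S n) by lia. rewrite S_INR. simpl. rewrite !RtoC_plus. change Cadd with Cplus. toC. field; auto.
Qed.

Lemma Cpow_nz w k : w <> RtoC 0 -> Coquelicot.Complex.Cpow w k <> RtoC 0.
Proof. intro H; induction k; simpl. apply C1_nz. intro E. apply IHk. rewrite <- (Cmult_1_l (Coquelicot.Complex.Cpow w k)), <- (Cinv_l w) by auto.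
 rewrite <- Cmult_assoc, E. toC; ring. Qed.
Lemma Cpow_inv w k : w <> RtoC 0 -> Coquelicot.Complex.Cpow (/ w) k = (/ Coquelicot.Complex.Cpow w k)%C.
Proof. intro H; induction k; simpl. toC; field. rewrite IHk. toC. field. split; auto. apply Cpow_nz; auto. Qed.

Lemma Cmul_nz (x y : Coquelicot.Complex.C) : x <> RtoC 0 -> y <> RtoC 0 -> (x * y)%C <> RtoC 0.
Proof. intros H1 H2 E. apply H1. replace x with (x * y * / y)%C by (toC; field; auto).
 rewrite E. toC; ring. Qed.

Lemma sq1_nz (x : Coquelicot.Complex.C) : x <> RtoC 0 -> (x - / x)%C <> RtoC 0 -> (x * x - 1)%C <> RtoC 0.
Proof. intros H1 H2 E. apply H2. replace (x - / x)%C with ((x * x - 1) / x)%C by (toC; field; auto).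
 rewrite E. toC; field; auto. Qed.

Lemma term_eq N t k : (1 <= N)%nat -> (1 <= k)%nat ->
 let M := INR N + 2 in let th := PI / M in let w := Cexpi th in let m := RtoC M in
 Cscale (b N k * sin (INR k * PI / M)) (Defs.Cpow (Cexpi t) k) =
 (RtoC (sin (2*PI/M)) / (m * (w - /w) * (w*w - /(w*w))) *
  (((m+1)*w - (m-1)/w + (-(w - /w)) * RtoC (INR k)) * Coquelicot.Complex.Cpow (Cexpi t * w * w) k
   + ((m+1)/w - (m-1)*w + (w - /w) * RtoC (INR k)) * Coquelicot.Complex.Cpow (Cexpi t * /w * /w) k
   + (-2*(w + /w) + 0 * RtoC (INR k)) * Coquelicot.Complex.Cpow (Cexpi t) k))%C.
Proof.
 intros HN Hk M th w m.
 assert (HM : 3 <= M). { unfold M. assert (1 <= INR N) by (apply (le_INR 1); lia). lra. }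
 assert (Hth : 0 < th < PI / 2). { unfold th. pose proof PI_RGT_0. split. apply Rdiv_lt_0_compat; lra.
   assert (/M <= /3) by (apply Rinv_le_contravar; lra). unfold Rdiv. assert (PI * /M <= PI * /3) by (apply Rmult_le_compat_l; lra). lra. }
 assert (Hs1 : sin th > 0) by (apply sin_gt_0; lra).
 assert (Hs2 : sin (th + th) > 0) by (apply sin_gt_0; lra).
 assert (Hw : w <> RtoC 0) by apply E_nz.
 assert (Hw1 : (w - / w)%C <> RtoC 0).
 { intro E. assert (RtoC (sin th) = RtoC 0). rewrite Rsin_E. fold w. rewrite E. toC. field. apply Ci_nz.
   apply RtoC_inj in H. lra. }
 assert (Hw2 : (w * w - / (w * w))%C <> RtoC 0).
 { intro E. assert (RtoC (sin (th+th)) = RtoC 0). rewrite Rsin_E, E_add. fold w. rewrite E. toC. field. apply Ci_nz.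
   apply RtoC_inj in H. lra. }
 destruct k as [|k]; [lia|].
 unfold b. cbv zeta. fold M.
 replace ((INR (S k) + 1) * PI / M) with (INR (S k) * th + th) by (unfold th; field; lra).
 replace ((INR (S k) - 1) * PI / M) with (INR (S k) * th + - th) by (unfold th; field; lra).
 replace (INR (S k) * PI / M) with (INR (S k) * th) by (unfold th; field; lra).
 replace (2 * PI / M) with (th + th) by (unfold th; field; lra).
 fold th.
 rewrite Cscale_eq, Cpow_eq.
 rewrite RtoC_mult, RtoC_div by (apply Rmult_integral_contrapositive; split; lra).
 rewrite !RtoC_minus, !RtoC_mult, !RtoC_plus, !RtoC_minus.
 rewrite !Rsin_E, !E_add, !E_neg, !E_pow. fold w.
 rewrite !Cpow_mul, !Cpow_inv by auto.
 assert (HW : Coquelicot.Complex.Cpow w (S k) <> RtoC 0) by (apply Cpow_nz; auto).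
 set (W := Coquelicot.Complex.Cpow w (S k)) in *.
 set (Z := Coquelicot.Complex.Cpow (Cexpi t) (S k)).
 assert (Hm : (RtoC (INR N) + 2)%C <> RtoC 0). { rewrite <- RtoC_plus. intro E; apply RtoC_inj in E. fold M in E. lra. }
 unfold m, M. rewrite !RtoC_plus.
 toC. field. repeat split; auto. all: try apply Ci_nz.
 - apply sq1_nz; auto. apply Cmul_nz; auto.
 - apply sq1_nz; auto.
Qed.

Lemma E_ne1 x : -PI < x < 2 * PI -> x <> 0 -> Cexpi x <> RtoC 1.
Proof. intros Hx H0 E. unfold Cexpi, RtoC in E. injection E; intros Hs Hc.
 destruct (Rlt_or_le x 0).
 - pose proof (sin_lt_0_var x ltac:(lra) H). lra.
 - destruct (Rlt_or_le x PI).
   + pose proof (sin_gt_0 x ltac:(lra) H1). lra.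
   + destruct (Req_dec x PI). subst; rewrite cos_PI in Hc; lra.
     pose proof (sin_lt_0 x ltac:(lra) ltac:(lra)). lra. Qed.

Lemma E_PI x : Cexpi (x + PI) = (- Cexpi x)%C.
Proof. unfold Cexpi, Copp. rewrite neg_cos, neg_sin. reflexivity. Qed.

Lemma nz_from (X Y k : Coquelicot.Complex.C) : Y <> RtoC 0 -> Y = (X * k)%C -> X <> RtoC 0.
Proof. intros H E E2. apply H. rewrite E, E2. toC; ring. Qed.

Lemma Cm1_nz (q : Coquelicot.Complex.C) : q <> RtoC 1 -> (q - 1)%C <> RtoC 0.
Proof. intros H E; apply H. replace q with (q - 1 + 1)%C by (toC; ring). rewrite E. toC; ring. Qed.

Theorem theorem1 (N : nat) (t : R) :
  (1 <= N)%nat ->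
  0 < t < PI ->
  t <> 2 * PI / (INR N + 2) ->
  let c := cos (2 * PI / (INR N + 2)) in
  P N (Cexpi t) =
  Cadd (Cof (/ (2 * (cos t - c))))
       (Cscale ((1 - c) / ((INR N + 2) * (1 - cos t))
                * (sin t * sin ((INR N + 2) * t / 2) / (cos t - c) ^ 2))
               (Cexpi ((INR N + 2) / 2 * t))).
Proof.
 intros HN Ht Ht2 c.
 set (M := INR N + 2) in *. set (th := PI / M).
 assert (HM : 3 <= M). { unfold M. assert (1 <= INR N) by (apply (le_INR 1); lia). lra. }
 assert (Hth : 0 < th < PI / 2). { unfold th. pose proof PI_RGT_0. split. apply Rdiv_lt_0_compat; lra.
   assert (/M <= /3) by (apply Rinv_le_contravar; lra). unfold Rdiv. assert (PI * /M <= PI * /3) by (apply Rmult_le_compat_l; lra). lra. }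
 assert (H2th : 2 * PI / M = th + th) by (unfold th; field; lra).
 rewrite H2th in Ht2. unfold c; clear c.
 assert (Hs2 : sin (th + th) > 0) by (apply sin_gt_0; lra).
 set (w := Cexpi th). set (z := Cexpi t).
 assert (Hw : w <> RtoC 0) by apply E_nz.
 assert (Hz : z <> RtoC 0) by apply E_nz.
 assert (Hq1 : (z * w * w)%C <> RtoC 1).
 { unfold z, w. rewrite <- !E_add. apply E_ne1; lra. }
 assert (Hq2 : (z * / w * / w)%C <> RtoC 1).
 { unfold z, w. rewrite <- !E_neg, <- !E_add. apply E_ne1; lra. }
 assert (Hq0 : z <> RtoC 1). { apply E_ne1; lra. }
 unfold P. fold M.
 rewrite H2th.
 rewrite (Csum_ext _ (fun k => (RtoC (sin (2*PI/M)) / (RtoC M * (w - /w) * (w*w - /(w*w))) *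
  (((RtoC M+1)*w - (RtoC M-1)/w + (-(w - /w)) * RtoC (INR k)) * Coquelicot.Complex.Cpow (z * w * w) k
   + ((RtoC M+1)/w - (RtoC M-1)*w + (w - /w) * RtoC (INR k)) * Coquelicot.Complex.Cpow (z * /w * /w) k
   + (-2*(w + /w) + 0 * RtoC (INR k)) * Coquelicot.Complex.Cpow z k))%C)).
 2:{ intros k Hk. apply term_eq; lia. }
 rewrite Csum_scal, !Csum_plus, !Csum_geo by auto.
 rewrite H2th, !Cpow_mul, !Cpow_inv by auto.
 assert (HWN : Coquelicot.Complex.Cpow w N = (- / (w * w))%C).
 { unfold w. rewrite <- E_pow. replace (INR N * th) with ((- (th + th)) + PI) by (unfold th, M in *; field; lra).
   rewrite E_PI, E_neg, E_add. reflexivity. }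
 rewrite HWN.
 assert (Hct : cos t - cos (th + th) <> 0).
 { intro E. apply Ht2. apply cos_inj; lra. }
 assert (Hst : sin t > 0) by (apply sin_gt_0; lra).
 assert (Hct1 : 1 - cos t <> 0).
 { intro E. pose proof (sin2_cos2 t). unfold Rsqr in *. assert (cos t = 1) by lra. nra. }
 replace (M * t / 2) with (M / 2 * t) by field.
 set (a := M / 2 * t).
 assert (HEa : (Cexpi a * Cexpi a)%C = (Coquelicot.Complex.Cpow z N * z * z)%C).
 { rewrite <- E_add. unfold z; rewrite <- E_pow, <- !E_add. f_equal. unfold a, M; field. }
 rewrite !Cscale_eq. change Cadd with Cplus. change Cof with RtoC.
 rewrite (RtoC_inv' (sin (th + th))) by lra.
 rewrite (RtoC_inv' (2 * (cos t - cos (th + th)))) by (apply Rmult_integral_contrapositive; split; lra).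
 rewrite (RtoC_mult ((1 - cos (th+th)) / (M * (1 - cos t)))).
 rewrite (RtoC_div (1 - cos (th+th))) by (apply Rmult_integral_contrapositive; split; lra).
 rewrite (RtoC_div (sin t * sin a)) by (apply pow_nonzero; auto).
 rewrite !RtoC_mult, !RtoC_minus, !RtoC_pow, !RtoC_minus.
 rewrite !Rsin_E, !Rcos_E, !E_add. fold w z.
 assert (HEa0 : Cexpi a <> RtoC 0) by apply E_nz.
 set (Ea := Cexpi a) in *.
 set (Z := Coquelicot.Complex.Cpow z N) in *.
 assert (HZ : Z = (Ea * Ea / (z * z))%C) by (rewrite HEa; toC; field; auto).
 rewrite HZ. clear HZ HEa.
 assert (Hm : (RtoC (INR N) + 2)%C <> RtoC 0). { rewrite <- RtoC_plus. intro E; apply RtoC_inj in E. fold M in E. lra. }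
 assert (Hs1 : sin th > 0) by (apply sin_gt_0; lra).
 assert (Hw1 : (w - / w)%C <> RtoC 0).
 { intro E. assert (RtoC (sin th) = RtoC 0). rewrite Rsin_E. fold w. rewrite E. toC. field. apply Ci_nz.
   apply RtoC_inj in H. lra. }
 assert (Hw2 : (w * w - / (w * w))%C <> RtoC 0).
 { intro E. assert (RtoC (sin (th+th)) = RtoC 0). rewrite Rsin_E, E_add. fold w. rewrite E. toC. field. apply Ci_nz.
   apply RtoC_inj in H. lra. }
 assert (Hc : ((z + / z) / 2 - (w * w + / (w * w)) / 2)%C <> RtoC 0).
 { intro E. apply Hct. apply RtoC_inj. rewrite RtoC_minus, !Rcos_E, E_add. fold w z. rewrite E. reflexivity. }
 assert (Hc1 : (1 - (z + / z) / 2)%C <> RtoC 0).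
 { intro E. apply Hct1. apply RtoC_inj. rewrite RtoC_minus, !Rcos_E. fold z. rewrite E. reflexivity. }
 pose proof (Cm1_nz _ Hq1). pose proof (Cm1_nz _ Hq2). pose proof (Cm1_nz _ Hq0).
 unfold M. rewrite !RtoC_plus.
 toC.
 field_simplify_eq.
 - assert (Ci2 : (Ci ^ 2)%C = RtoC (-1)). { unfold Ci, Cmult, RtoC; simpl. apply injective_projections; simpl; ring. }
   rewrite Ci2. ring.
 - cbv beta. clearbody Z Ea a w z th M. assert (sq1_nz' := sq1_nz).
   assert (Hwsq : (w * w)%C <> RtoC 0) by (apply Cmul_nz; auto).
   repeat split; auto; try apply Ci_nz.
   + apply (nz_from _ _ (/ (2 * z * (w * w)))%C Hc). toC; field; auto.
   + apply (nz_from _ _ (/ (2 * z))%C Hc1). toC; field; auto.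
   + apply (nz_from _ _ (-1)%C H1). toC; ring.
   + apply (nz_from _ _ (- / (w * w))%C H0). toC; field; auto.
   + apply (nz_from _ _ (/ (w * w))%C H0). toC; field; auto.
   + apply (nz_from _ _ (-1)%C H). toC; ring.
Qed.
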